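(* Let $G$ be a finite group and $D\trianglelefteq G$, and suppose that the conjugation action of $G$ on the Burnside ring of $D$ factors through a quotient of $G$ of order $n$. (1) If $\Theta=\sum_in_iH_i$ is a $G$-relation with all $H_i\subseteq D$, then $n\Theta=\operatorname{Ind}_D^G\Theta'$ for some $D$-relation $\Theta'$. (2) Suppose moreover $N\trianglelefteq G$ with $N\subseteq D$, and every subgroup of $G$ either contains $N$ or is contained in $D$. Then for every $G$-relation $\Theta$, $n\Theta$ is the sum of a $G$-relation of the form $\operatorname{Ind}_D^G\Theta'$ with $\Theta'$ a $D$-relation and a $G$-relation of the form $\sum_jm_jU_j$ with $U_j\supseteq N$ and $\sum_jm_jU_j/N$ a $G/N$-relation.
   Context: The Burnside ring of a finite group $G$ is the free abelian group on the set of conjugacy classes of subgroups of $G$. A $G$-relation is an element $\Theta=\sum_in_iH_i$ of it with $\bigoplus_i\mathbb C[G/H_i]^{\oplus n_i}=0$ as virtual representation. For $D\le G$ and a $D$-relation $\Theta'$, $\operatorname{Ind}_D^G\Theta'$ denotes the same formal sum regarded as an element of the Burnside ring of $G$ (it is a $G$-relation). *)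

(* Defs.v *)
From HB Require Import structures.
From mathcomp Require Import all_boot all_order all_algebra all_fingroup all_solvable all_field all_character.
Set Implicit Arguments. Unset Strict Implicit. Unset Printing Implicit Defensive.
Import GRing.Theory Num.Theory.
Local Open Scope ring_scope.

(* A formal Z-linear combination of subgroups of gT is a function
   f : {group gT} -> int (the element sum_H f(H) [H]).  It represents an
   element of the Burnside ring of G when its support consists of subgroups
   of G; its class in the Burnside ring of G is determined by the sums of f
   over the G-conjugacy classes of subgroups. *)

Definition supported_in (gT : finGroupType) (G : {set gT})
  (f : {group gT} -> int) : Prop :=
  forall H : {group gT}, f H != 0 -> H \subset G.

Definition class_coef (gT : finGroupType) (G : {set gT})
  (f : {group gT} -> int) (H : {group gT}) : int :=
  \sum_(K : {group gT} | [exists x in G, K :==: (H :^ x)%g]) f K.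

Definition burnside_eq (gT : finGroupType) (G : {set gT})
  (f g : {group gT} -> int) : Prop :=
  forall H : {group gT}, class_coef G f H = class_coef G g H.

(* permutation character of C[G/H] is 'Ind[G, H] 1 ; a G-relation is a
   formal sum of subgroups of G whose virtual permutation representation
   vanishes, i.e. whose (virtual) character vanishes. *)
Definition is_relation (gT : finGroupType) (G : {group gT})
  (f : {group gT} -> int) : Prop :=
  supported_in G f /\
  \sum_(H : {group gT}) ('Ind[G, H] (1 : 'CF(H))) *~ f H = 0.

Definition scale_bs (gT : finGroupType) (n : nat) (f : {group gT} -> int)
  : {group gT} -> int := fun H => n%:Z * f H.

Definition add_bs (gT : finGroupType) (f g : {group gT} -> int)
  : {group gT} -> int := fun H => f H + g H.

Definition quot_bs (gT : finGroupType) (N : {group gT})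
  (u : {group gT} -> int) : {group coset_of N} -> int :=
  fun Q => \sum_(U : {group gT} | (U / N)%G == Q) u U.
Arguments quot_bs {gT} N u _.

(* Main.v *)
Require Import Defs.
From HB Require Import structures.
From mathcomp Require Import all_boot all_order all_algebra all_fingroup all_solvable all_field all_character.
Import GRing.Theory Num.Theory.
Local Open Scope ring_scope.

Section Helpers.
Variable gT : finGroupType.
Implicit Types (A G D H K L N : {group gT}).

Lemma sum_mulr_g (R : nmodType) A y (F : gT -> R) :
  y \in A -> \sum_(z in A) F (z * y)%g = \sum_(z in A) F z.
Proof.
move=> Ay; rewrite [RHS](reindex_inj (mulIg y)) /=.
by apply: eq_bigl => z; rewrite groupMr.
Qed.

Lemma sum_mull_g (R : nmodType) A y (F : gT -> R) :
  y \in A -> \sum_(z in A) F (y * z)%g = \sum_(z in A) F z.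
Proof.
move=> Ay; rewrite [RHS](reindex_inj (mulgI y)) /=.
by apply: eq_bigl => z; rewrite groupMl.
Qed.

Lemma sum_inv_g (R : nmodType) A (F : gT -> R) :
  \sum_(z in A) F (z^-1)%g = \sum_(z in A) F z.
Proof.
rewrite [RHS](reindex_inj invg_inj) /=.
by apply: eq_bigl => z; rewrite groupV.
Qed.

Lemma Ind1E D L x : L \subset D ->
  'Ind[D, L] 1 x = #|L|%:R^-1 * \sum_(z in D) ((x ^ z)%g \in L)%:R.
Proof.
move=> sLD; rewrite cfIndE //; congr (_ * _); apply: eq_bigr => z _.
by rewrite cfun1E.
Qed.


Lemma Ind1J D L y x : L \subset D -> y \in D ->
  'Ind[D, (L :^ y)%G] 1 x = 'Ind[D, L] 1 x.
Proof.
move=> sLD Dy; have sLyD : (L :^ y)%G \subset D by rewrite /= -(conjGid Dy) conjSg.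
rewrite !Ind1E // cardJg; congr (_ * _).
rewrite -[RHS](sum_mulr_g _ D (y^-1)%g _ (groupVr Dy)); apply: eq_bigr => z _.
by rewrite /= -(memJ_conjg L y) -conjgM mulgKV.
Qed.

Lemma sumInd G D H x : (D <| G)%g -> H \subset D -> x \in D ->
  \sum_(g in G) 'Ind[D, (H :^ g)%G] 1 x = #|D|%:R * 'Ind[G, H] 1 x.
Proof.
move=> nDG sHD Dx; have [sDG nDG'] := andP nDG.
have sHG := subset_trans sHD sDG.
have sHgD g : g \in G -> (H :^ g)%G \subset D.
  by move=> Gg; rewrite /= -(normsP nDG' g Gg) conjSg.
rewrite (eq_bigr (fun g => #|H|%:R^-1 * \sum_(z in D) ((x ^ z)%g \in (H :^ g)%g)%:R));
  last by move=> g Gg; rewrite Ind1E ?sHgD // cardJg.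
rewrite -mulr_sumr Ind1E // mulrCA; congr (_ * _).
rewrite exchange_big /=.
rewrite (eq_bigr (fun z => \sum_(g in G) ((x ^ g)%g \in H)%:R)); last first.
  move=> z Dz; have Gz := subsetP sDG z Dz.
  rewrite -(sum_inv_g _ G) -[RHS](sum_mull_g _ G z _ Gz).
  apply: eq_bigr => g _.
  by rewrite -(memJ_conjg _ g) conjsgKV -conjgM.
by rewrite sumr_const mulr_natl.
Qed.

Lemma sum_rcosets (R : nmodType) G K (phi : gT -> R) : K \subset G ->
  (forall k g, k \in K -> g \in G -> phi (k * g)%g = phi g) ->
  \sum_(g in G) phi g = \sum_(C in rcosets K G) phi (repr C) *+ #|K|.
Proof.
move=> sKG hphi; rewrite (partition_big_imset (rcoset K)) /=.
apply: eq_bigr => C /imsetP[y Gy eC]; subst C.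
have E g : g \in (K :* y)%g -> phi g = phi y.
  by move=> /rcosetP[k Kk ->]; apply: hphi.
rewrite (eq_bigl (fun g => g \in (K :* y)%g)); last first.
  move=> g /=; rewrite !rcosetE; apply/idP/idP => [/andP[_ /eqP e]|Kg].
    by apply/rcoset_eqP.
  apply/andP; split; last by apply/eqP/rcoset_eqP.
  by case/rcosetP: Kg => k Kk ->; rewrite groupM // (subsetP sKG).
rewrite (eq_bigr (fun=> phi y)) => [|g /E] //.
by rewrite sumr_const card_rcoset rcosetE E // mem_repr_rcoset.
Qed.

Lemma mulz_cfunE (B : {set gT}) (phi : 'CF(B)) (z : int) x :
  (phi *~ z) x = phi x *~ z.
Proof. by case: z => m; rewrite /intmul ?cfunE muln_cfunE. Qed.

Lemma IndK G D K H x k g : (D <| G)%g -> H \subset D -> k \in K -> g \in G ->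
  (forall k, k \in K -> forall H : {group gT}, H \subset D ->
          exists2 d, d \in D & (H :^ k)%g = (H :^ d)%g) ->
  'Ind[D, (H :^ (k * g))%G] 1 x = 'Ind[D, (H :^ g)%G] 1 x.
Proof.
move=> nDG sHD Kk Gg hK; have [sDG nDG'] := andP nDG.
have [d Dd e] := hK k Kk H sHD.
have -> : (H :^ (k * g))%G = ((H :^ g) :^ (d ^ g))%G.
  by apply: val_inj; rewrite /= conjsgM e -conjsgM conjgC conjsgM.
apply: Ind1J; last by rewrite memJ_norm // (subsetP nDG').
by rewrite /= -(normsP nDG' g Gg) conjSg.
Qed.
End Helpers.

Definition rho (gT : finGroupType) (G K : {set gT}) (f : {group gT} -> int)
  (L : {group gT}) : int :=
  \sum_(C in rcosets K G) f ((L :^ (repr C)^-1)%G).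
Arguments rho {gT} G K f L.

Lemma class_coef_conj (gT : finGroupType) (G H : {group gT}) f r : r \in G ->
  \sum_(L : {group gT} | [exists x in G, L :==: (H :^ x)%g]) f ((L :^ r^-1)%G)
  = class_coef G f H.
Proof.
move=> Gr; rewrite /class_coef.
have hinj : injective (fun L : {group gT} => (L :^ r^-1)%G).
  by move=> L1 L2 /(congr1 val) /= /conjsg_inj e; apply: val_inj.
rewrite [RHS](reindex_inj hinj) /=; apply: eq_bigl => L.
apply/existsP/existsP => [[x /andP[Gx /eqP e]]|[x /andP[Gx /eqP e]]].
  by exists (x * r^-1)%g; rewrite groupM ?groupV //= e conjsgM eqxx.
by exists (x * r)%g; rewrite groupM //= conjsgM -e conjsgKV eqxx.
Qed.

Arguments class_coef_conj {gT}.
Arguments sum_mull_g {gT R}.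
Arguments sum_mulr_g {gT R}.
Arguments sum_inv_g {gT R}.
Arguments Ind1E {gT}.
Arguments sum_rcosets {gT R}.
Arguments sumInd {gT}.
Arguments IndK {gT}.

Lemma part1 (gT : finGroupType) (G D K : {group gT}) (n : nat)
  (nDG : (D <| G)%g) (nKG : (K <| G)%g) (hn : #|G : K|%g = n)
  (hK : forall k, k \in K -> forall H : {group gT}, H \subset D ->
          exists2 d, d \in D & (H :^ k)%g = (H :^ d)%g)
  (f : {group gT} -> int) :
  is_relation G f -> (forall H : {group gT}, f H != 0 -> H \subset D) ->
  is_relation D (rho G K f) /\ burnside_eq G (scale_bs n f) (rho G K f).
Proof.
move=> [suppf charf] sfD; have [sDG nDG'] := andP nDG; have [sKG _] := andP nKG.
have Grep C : C \in rcosets K G -> repr C \in G.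
  case/imsetP=> y Gy ->; rewrite rcosetE.
  have /rcosetP[k Kk ->] := mem_repr_rcoset K y.
  by rewrite groupM // (subsetP sKG).
split; last first.
  move=> H; rewrite /class_coef /scale_bs /rho -mulr_sumr [RHS]exchange_big /=.
  rewrite [RHS](eq_bigr (fun=> class_coef G f H)); last first.
    by move=> C CG; rewrite class_coef_conj // Grep.
  by rewrite sumr_const -hn /indexg mulrC -natz mulr_natr.
split.
  move=> L; rewrite /rho => /eqP nz.
  case: (boolP [exists C in rcosets K G, f ((L :^ (repr C)^-1)%G) != 0]);
    last first.
    move=> /exists_inP hne; exfalso; apply: nz; apply: big1 => C CG.
    by apply/eqP/negbNE/negP => fC; apply: hne; exists C.
  move=> /exists_inP[C CG fC].
  have := sfD _ fC; rewrite /= sub_conjgV => /subset_trans; apply.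
  by rewrite (normsP nDG') // Grep.
rewrite /rho.
under eq_bigr do rewrite mulrz_sumr.
rewrite exchange_big /=.
rewrite (eq_bigr (fun C => \sum_(H : {group gT})
           'Ind[D, (H :^ repr C)%G] 1 *~ f H)); last first.
  move=> C _.
  have hinj : injective (fun H : {group gT} => (H :^ repr C)%G).
    by move=> L1 L2 /(congr1 val) /= /conjsg_inj e; apply: val_inj.
  rewrite (reindex_inj hinj) /=; apply: eq_bigr => H _.
  by congr (_ *~ f _); apply: val_inj; rewrite /= conjsgK.
apply/cfun_inP => x Dx; rewrite cfunE sum_cfunE.
under eq_bigr do rewrite sum_cfunE.
have hK0 : (#|K|%:R : algC) != 0 by rewrite pnatr_eq0 -lt0n cardG_gt0.
apply: (mulfI hK0); rewrite mulr0 exchange_big /= mulr_sumr.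
have hx : \sum_(H : {group gT}) 'Ind[G, H] 1 x *~ f H = 0.
  have := congr1 (fun phi : 'CF(G) => phi x) charf; rewrite /= sum_cfunE cfunE.
  by move=> h; rewrite -[RHS]h; apply: eq_bigr => H _; rewrite mulz_cfunE.
transitivity (#|D|%:R * \sum_(H : {group gT}) 'Ind[G, H] 1 x *~ f H); last by rewrite hx mulr0.
rewrite [RHS]mulr_sumr; apply: eq_bigr => H _.
under eq_bigr do rewrite mulz_cfunE.
case: (eqVneq (f H) 0) => [->|fH].
  by rewrite !mulr0z big1 ?mulr0 // => C _; rewrite mulr0z.
rewrite -mulrz_suml !mulrzAr; congr (_ *~ _).
rewrite -sumInd //; last exact: sfD.
rewrite (sum_rcosets G K) //; last by move=> k g Kk Gg; exact: (IndK G D K H x k g nDG (sfD H fH) Kk Gg hK).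
by rewrite mulr_sumr; apply: eq_bigr => C _; rewrite mulr_natl.
Qed.
Lemma modInd (gT : finGroupType) (G N U : {group gT}) :
  (N <| G)%g -> N \subset U -> U \subset G ->
  ('Ind[(G / N)%G, (U / N)%G] 1 %% N)%CF = 'Ind[G, U] 1.
Proof.
move=> nNG sNU sUG; have [sNG nNG'] := andP nNG.
have skU : ('ker (coset N))%g \subset U by rewrite ker_coset.
have := cfIndMorph (f := coset N) 1 skU sUG nNG'.
rewrite rmorph1 => ->. done.
Qed.

Lemma count_LN (gT : finGroupType) (L N : {group gT}) y :
  \sum_(m in N) ((y * m)%g \in L)%:R = ((y \in (L * N)%g)%:R * #|L :&: N|%:R : algC).
Proof.
case: (boolP (y \in (L * N)%g)) => [/mulsgP[l n Ll Nn ->]|nLN]; last first.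
  rewrite mul0r; apply: big1 => m Nm.
  case: (boolP ((y * m)%g \in L)) => // ymL; case/negP: nLN.
  by rewrite -(mulgK m y) mem_mulg // groupV.
rewrite mul1r (eq_bigr (fun m => ((n * m)%g \in L)%:R)); last first.
  by move=> m _; rewrite -mulgA groupMl.
rewrite (sum_mull_g N n (fun m => (m \in L)%:R) Nn).
rewrite -natr_sum -sum1_card; congr (_%:R).
rewrite [RHS]big_mkcond [LHS]big_mkcond /=; apply: eq_bigr => m _.
by rewrite in_setI andbC; case: (m \in N); case: (m \in L).
Qed.

Lemma IndLN (gT : finGroupType) (G L N : {group gT}) x : (N <| G)%g -> L \subset G ->
  x \in G ->
  #|N|%:R * 'Ind[G, (L <*> N)%G] 1 x = \sum_(m in N) 'Ind[G, L] 1 (x * m)%g.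
Proof.
move=> nNG sLG Gx; have [sNG nNG'] := andP nNG.
have nLN : L \subset 'N(N)%g := subset_trans sLG nNG'.
have sLNG : (L <*> N)%G \subset G by rewrite /= join_subG sLG.
rewrite Ind1E // /= norm_joinEl //.
rewrite [RHS](eq_bigr (fun m => #|L|%:R^-1 * \sum_(z in G) ((((x * m) ^ z)%g \in L)%:R : algC)));
  last by move=> m _; rewrite Ind1E.
rewrite -mulr_sumr exchange_big /=.
rewrite [X in _ = _ * X](eq_bigr (fun g => (((x ^ g)%g \in (L * N)%g)%:R * #|L :&: N|%:R)));
  last first.
  move=> g Gg; rewrite -count_LN.
  rewrite [RHS](reindex_inj (conjg_inj g)) /=.
  apply: eq_big => [m|m _]; first by rewrite memJ_norm // (subsetP nNG').
  by rewrite conjMg.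
rewrite -mulr_suml.
set S := \sum_(z in G) _.
rewrite [LHS]mulrA [RHS]mulrA [RHS]mulrAC; congr (_ * _).
have aNZ : (#|L|%:R : algC) != 0 by rewrite pnatr_eq0 -lt0n cardG_gt0.
have pNZ : (#|(L * N)%g|%:R : algC) != 0.
  by rewrite pnatr_eq0 -lt0n -norm_joinEl // cardG_gt0.
apply: (mulfI aNZ); rewrite mulrA -natrM mul_cardG natrM mulrAC mulfV // mul1r.
by rewrite mulrA mulfV // mul1r.
Qed.

Lemma regroup (T U : finType) (V : zmodType) (h : T -> U) (F : U -> V)
  (a : T -> int) :
  \sum_(u : U) F u *~ (\sum_(t | h t == u) a t) = \sum_(t : T) F (h t) *~ a t.
Proof.
rewrite [RHS](partition_big h xpredT) //=; apply: eq_bigr => u _.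
rewrite mulrz_sumr; apply: eq_big => // t /eqP ->.
by [].
Qed.

Definition fN (gT : finGroupType) (N : {group gT}) (f : {group gT} -> int)
  (H : {group gT}) : int :=
  \sum_(L : {group gT} | (L <*> N)%G == H) f L.
Arguments fN {gT} N f H.

Lemma fN_char (gT : finGroupType) (G N : {group gT}) (f : {group gT} -> int) :
  is_relation G f -> (N <| G)%g ->
  \sum_(H : {group gT}) 'Ind[G, H] 1 *~ fN N f H = 0.
Proof.
move=> [suppf charf] nNG; have [sNG nNG'] := andP nNG.
rewrite /fN (regroup _ _ _ (fun L : {group gT} => (L <*> N)%G) (fun H : {group gT} => 'Ind[G, H] 1)).
apply/cfun_inP => x Gx; rewrite cfunE sum_cfunE.
have NNZ : (#|N|%:R : algC) != 0 by rewrite pnatr_eq0 -lt0n cardG_gt0.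
apply: (mulfI NNZ); rewrite mulr0 mulr_sumr.
transitivity (\sum_(m in N)
   (\sum_(L : {group gT}) 'Ind[G, L] 1 *~ f L) (x * m)%g); last first.
  by apply: big1 => m _; rewrite charf cfunE.
under [RHS]eq_bigr do rewrite sum_cfunE.
rewrite [RHS]exchange_big /=; apply: eq_bigr => L _.
case: (eqVneq (f L) 0) => [->|fL].
  by rewrite mulr0z cfunE mulr0 big1 // => m _; rewrite mulr0z cfunE.
under [RHS]eq_bigr do rewrite mulz_cfunE.
rewrite mulz_cfunE mulrzAr -mulrz_suml IndLN //.
exact: suppf.
Qed.

Theorem lemma2p5 (gT : finGroupType) (G D K : {group gT}) (n : nat)
  (nDG : (D <| G)%g) (nKG : (K <| G)%g) (hn : #|G : K|%g = n)
  (hK : forall k, k \in K -> forall H : {group gT}, H \subset D ->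
          exists2 d, d \in D & (H :^ k)%g = (H :^ d)%g) :
  (forall f : {group gT} -> int, is_relation G f ->
     (forall H : {group gT}, f H != 0 -> H \subset D) ->
     exists f' : {group gT} -> int,
       is_relation D f' /\ burnside_eq G (scale_bs n f) f')
  /\
  (forall N : {group gT}, (N <| G)%g -> N \subset D ->
     (forall H : {group gT}, H \subset G -> N \subset H \/ H \subset D) ->
     forall f : {group gT} -> int, is_relation G f ->
     exists f' : {group gT} -> int, exists u : {group gT} -> int,
       [/\ is_relation D f', is_relation G u,
           (forall U : {group gT}, u U != 0 -> N \subset U),
           is_relation (G / N)%G (quot_bs N u)
         & burnside_eq G (scale_bs n f) (add_bs f' u)]).
Proof.
split.
  move=> f relf sfD; exists (rho G K f); exact: part1.
move=> N nNG sND hND f relf; have [sNG nNG'] := andP nNG.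
have [suppf charf] := relf.
have fNsupp U : fN N f U != 0 ->
    exists2 L : {group gT}, (L <*> N)%G = U & f L != 0.
  move=> nz; case: (boolP [exists L : {group gT}, ((L <*> N)%G == U) && (f L != 0)]).
    by case/existsP=> L /andP[/eqP eL fL]; exists L.
  move=> /existsPn hne; case/eqP: nz; apply: big1 => L eL.
  by apply/eqP/negbNE/negP => fL; have := hne L; rewrite eL fL.
have fNG U : fN N f U != 0 -> U \subset G.
  by case/fNsupp=> L <- fL; rewrite /= join_subG sNG andbT suppf.
have fNN U : fN N f U != 0 -> N \subset U.
  by case/fNsupp=> L <- fL; rewrite /= joing_subr.
pose g := fun H => f H - fN N f H.
have relg : is_relation G g.
  split.
    move=> H; rewrite /g; case: (eqVneq (f H) 0) => [->|/suppf //].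
    by rewrite sub0r oppr_eq0 => /fNG.
  under eq_bigr do rewrite mulrzBr.
  by rewrite sumrB charf (fN_char _ G N f relf nNG) subr0.
have sgD H : g H != 0 -> H \subset D.
  move=> gH; have sHG : H \subset G by case: relg => sp _; apply: sp.
  case: (boolP (H \subset D)) => // nHD; case/eqP: gH.
  have sNH : N \subset H by case: (hND H sHG) => // sHD; rewrite sHD in nHD.
  rewrite /g /fN (bigD1 H) /=; last first.
    by apply/eqP/val_inj; rewrite /=; apply/joing_idPl.
  rewrite big1 ?addr0 ?subrr // => L /andP[/eqP eLH nLH].
  apply/eqP/negbNE/negP => fL; have sLG := suppf L fL.
  case: (hND L sLG) => [sNL|sLD].
    case/eqP: nLH; rewrite -eLH; apply: val_inj => /=.
    by symmetry; apply/joing_idPl.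
  by case/negP: nHD; rewrite -eLH /= join_subG sLD sND.
have [relf' bf'] := part1 gT G D K n nDG nKG hn hK g relg sgD.
pose u := scale_bs n (fN N f).
have uN U : u U != 0 -> fN N f U != 0.
  by rewrite /u /scale_bs mulf_eq0 negb_or => /andP[].
have relu : is_relation G u.
  split; first by move=> U /uN /fNG.
  rewrite /u /scale_bs.
  under eq_bigr do rewrite mulrC mulrzA.
  by rewrite -mulrz_suml (fN_char _ G N f relf nNG) mul0rz.
exists (rho G K g), u; split => //.
- by move=> U /uN /fNN.
- split.
    move=> Q nz.
    case: (boolP [exists U : {group gT}, ((U / N)%G == Q) && (u U != 0)]).
      case/existsP=> U /andP[/eqP <- uU].
      by rewrite /= quotientS // fNG // uN.
    move=> /existsPn hne; case/eqP: nz; apply: big1 => U eU.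
    by apply/eqP/negbNE/negP => uU; have := hne U; rewrite eU uU.
  rewrite /quot_bs (regroup _ _ _ (fun U : {group gT} => (U / N)%G)
     (fun Q : {group coset_of N} => 'Ind[(G / N)%G, Q] 1)).
  apply: (can_inj (cfModK nNG)); rewrite raddf0 raddf_sum.
  case: relu => _ e; rewrite -[RHS]e; apply: eq_bigr => U _; rewrite raddfMz.
  case: (eqVneq (u U) 0) => [->|uU]; first by rewrite !mulr0z.
  by rewrite -(modInd _ G N U nNG) ?fNN ?fNG ?uN.
- move=> H; have := bf' H; rewrite /class_coef => e.
  rewrite /add_bs big_split /= -e -big_split /=.
  by apply: eq_bigr => L _; rewrite /u /scale_bs /g mulrBr subrK.
Qed.
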